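(* Let $n\geqslant2$, $\lambda>0$, distinct points $p_1,\ldots,p_M\in\mathbb{Z}^n$ and positive integers $n_1,\ldots,n_M$ be given, let $C=4\pi\sum_{j=1}^Mn_j$, and let $\Omega_0$ be a finite subset of $\mathbb{Z}^n$ containing $\{p_j\}_{j=1}^M$. For any finite subset $\Omega\supset\Omega_0$, the boundary value problem $$\Delta u=\lambda e^u(e^u-1)+4\pi\sum_{j=1}^Mn_j\delta_{p_j}\ \text{ on }\Omega,\qquad u=0\ \text{ on }\delta\Omega$$ has a solution $u_\Omega:\overline\Omega\to\mathbb{R}$ which is maximal among all solutions of this boundary value problem (i.e. $v\leqslant u_\Omega$ on $\overline\Omega$ for every solution $v$) and satisfies $\|u_\Omega\|_{l^2(\Omega)}\leqslant C_0$, where $C_0$ is a constant depending only on $n$, $\lambda$ and $C$.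
   Context: $\mathbb{Z}^n$ is the integer lattice graph with $x\sim y$ iff $\sum_i|x_i-y_i|=1$. For a finite $\Omega\subset\mathbb{Z}^n$, $\delta\Omega=\{y\in\mathbb{Z}^n\setminus\Omega:\exists x\in\Omega,\ y\sim x\}$ and $\overline\Omega=\Omega\cup\delta\Omega$. For $u:\overline\Omega\to\mathbb{R}$ and $x\in\Omega$, $\Delta u(x)=\sum_{y\sim x}(u(y)-u(x))$. $\delta_p$ is the function equal to $1$ at $p$ and $0$ elsewhere. $\|u\|_{l^2(\Omega)}=(\sum_{x\in\Omega}u(x)^2)^{1/2}$. *)

(* Defs.v *)
From HB Require Import structures.
From mathcomp Require Import all_boot all_order all_algebra.
From mathcomp Require Import finmap.
From mathcomp Require Import reals sequences exp trigo.
Set Implicit Arguments. Unset Strict Implicit. Unset Printing Implicit Defensive.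
Import Order.TTheory GRing.Theory Num.Theory.
Local Open Scope ring_scope.

Definition pt (n : nat) := {ffun 'I_n -> int}.

Definition adj n (x y : pt n) : bool := (\sum_(i < n) `|x i - y i|%N)%N == 1%N.

Definition vbdry n (Om : {fset pt n}) (y : pt n) : Prop :=
  y \notin Om /\ exists2 x, x \in Om & adj x y.
Definition vclos n (Om : {fset pt n}) (y : pt n) : Prop :=
  y \in Om \/ vbdry Om y.

(* The lattice neighbour x + s e_i. The neighbours of x (points y with adj x y)
   are exactly shift x i 1 and shift x i (-1), i < n. *)
Definition shift n (x : pt n) (i : 'I_n) (s : int) : pt n :=
  [ffun j => if j == i then x j + s else x j].

Definition lap {R : realType} n (u : pt n -> R) (x : pt n) : R :=
  \sum_(i < n) ((u (shift x i 1) - u x) + (u (shift x i (-1)) - u x)).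

Definition dirac {R : realType} n (p x : pt n) : R := if x == p then 1 else 0.

Definition solves {R : realType} n (lam : R) M (p : 'I_M -> pt n) (nj : 'I_M -> nat)
    (Om : {fset pt n}) (u : pt n -> R) : Prop :=
  (forall x, x \in Om ->
     lap u x = lam * expR (u x) * (expR (u x) - 1)
               + 4 * pi * \sum_(j < M) (nj j)%:R * dirac (p j) x)
  /\ (forall y, vbdry Om y -> u y = 0).

Definition l2norm {R : realType} n (Om : {fset pt n}) (u : pt n -> R) : R :=
  Num.sqrt (\sum_(x <- Om) u x ^+ 2).

(* Main.v *)
Require Import Defs.
From HB Require Import structures.
From mathcomp Require Import all_boot all_order all_algebra.
From mathcomp Require Import finmap.
From mathcomp Require Import reals sequences exp trigo.
From mathcomp Require Import lra ring.
From mathcomp Require Import boolp classical_sets.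
Import Order.TTheory GRing.Theory Num.Theory.
Local Open Scope ring_scope.
Set Implicit Arguments.

Lemma shiftK n (x : pt n) i (s : int) : shift (shift x i s) i (- s) = x.
Proof.
apply/ffunP => j; rewrite !ffunE; case: eqP => // ->.
by rewrite addrK.
Qed.

Lemma shift_eqE n (x y : pt n) i (s : int) :
  (y == shift x i s) = (x == shift y i (- s)).
Proof.
apply/eqP/eqP => [->|->]; first by rewrite shiftK.
by rewrite -{2}(opprK s) shiftK.
Qed.

Definition nbsum {R : realType} {n : nat} (F : 'I_n -> int -> R) : R :=
  \sum_(i < n) (F i 1 + F i (-1)).

Lemma nbsum_add {R : realType} n (F G : 'I_n -> int -> R) :
  nbsum (fun i s => F i s + G i s) = nbsum F + nbsum G.
Proof.
rewrite /nbsum -big_split /=; apply: eq_bigr => i _; lra.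
Qed.

Lemma nbsum_le {R : realType} n (F G : 'I_n -> int -> R) :
  (forall i s, (s = 1 \/ s = -1) -> F i s <= G i s) -> nbsum F <= nbsum G.
Proof.
move=> h; rewrite /nbsum; apply: ler_sum => i _; apply: lerD; apply: h; by [left|right].
Qed.

Lemma nbsum_ge0 {R : realType} n (F : 'I_n -> int -> R) :
  (forall i s, (s = 1 \/ s = -1) -> 0 <= F i s) -> 0 <= nbsum F.
Proof.
move=> h; rewrite /nbsum; apply: sumr_ge0 => i _; apply: addr_ge0; apply: h; by [left|right].
Qed.

Lemma nbsum_const {R : realType} n (c : R) :
  nbsum (fun (i : 'I_n) (s : int) => c) = 2 * n%:R * c.
Proof.
rewrite /nbsum sumr_const card_ord -mulr_natl; lra.
Qed.

Lemma nbsum_sum {R : realType} n (I : Type) (r : seq I) (F : I -> 'I_n -> int -> R) :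
  nbsum (fun i s => \sum_(y <- r) F y i s) = \sum_(y <- r) nbsum (F y).
Proof.
rewrite /nbsum.
under eq_bigr => i _ do rewrite -big_split /=.
by rewrite exchange_big.
Qed.

Lemma nbsum_mull {R : realType} n (c : R) (F : 'I_n -> int -> R) :
  nbsum (fun i s => c * F i s) = c * nbsum F.
Proof.
rewrite /nbsum mulr_sumr; apply: eq_bigr => i _; lra.
Qed.

Lemma sum_pick {R : realType} (T : eqType) (A : seq T) (z : T) (G : T -> R) :
  uniq A -> \sum_(y <- A) (y == z)%:R * G y = (z \in A)%:R * G z.
Proof.
elim: A => [|a A IH] /=; first by rewrite big_nil mul0r.
move=> /andP [aA uA]; rewrite big_cons IH // in_cons.
case: (eqVneq a z) => [<-|az] /=.
  by rewrite (negbTE aA) !mul0r addr0.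
by rewrite mul0r add0r; case: (z \in A).

Qed.

Definition wgt {R : realType} {n : nat} (x y : pt n) : R :=
  nbsum (fun i s => (y == shift x i s)%:R).

Lemma wgt_sym {R : realType} n (x y : pt n) : @wgt R n x y = wgt y x.
Proof.
rewrite /wgt /nbsum; apply: eq_bigr => i _.
rewrite (shift_eqE x y i 1) (shift_eqE x y i (-1)) opprK addrC.
by [].

Qed.

Definition Out {R : realType} {n : nat} (A : {fset pt n}) (u : pt n -> R) (x : pt n) : R :=
  nbsum (fun i s => (shift x i s \notin A)%:R * (u (shift x i s) - u x)).

Lemma nbsum_mulr {R : realType} n (c : R) (F : 'I_n -> int -> R) :
  nbsum F * c = nbsum (fun i s => F i s * c).
Proof.
rewrite /nbsum mulr_suml; apply: eq_bigr => i _; lra.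
Qed.

Lemma in_part {R : realType} n (A : {fset pt n}) (u : pt n -> R) (x : pt n) :
  \sum_(y <- A) wgt x y * (u y - u x) =
  nbsum (fun i s => (shift x i s \in A)%:R * (u (shift x i s) - u x)).
Proof.
under eq_bigr => y _ do rewrite /wgt nbsum_mulr.
rewrite -nbsum_sum; rewrite /nbsum; apply: eq_bigr => i _.
by rewrite !(sum_pick _ _ _ (fun y => u y - u x)) // fset_uniq.
Qed.

Lemma lap_split {R : realType} n (A : {fset pt n}) (u : pt n -> R) (x : pt n) :
  lap u x = \sum_(y <- A) wgt x y * (u y - u x) + Out A u x.
Proof.
rewrite in_part /Out -nbsum_add /lap /nbsum; apply: eq_bigr => i _.
case: (shift x i 1 \in A); case: (shift x i (-1) \in A) => /=; lra.
Qed.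

Lemma in_zero {R : realType} n (A : {fset pt n}) (u : pt n -> R) :
  \sum_(x <- A) \sum_(y <- A) wgt x y * (u y - u x) = 0.
Proof.
have E : \sum_(x <- A) \sum_(y <- A) wgt x y * u y =
         \sum_(x <- A) \sum_(y <- A) wgt x y * u x.
  rewrite exchange_big /=; apply: eq_bigr => x _; apply: eq_bigr => y _.
  by rewrite wgt_sym.
under eq_bigr => x _ do under eq_bigr => y _ do rewrite mulrBr.
under eq_bigr => x _ do rewrite sumrB.
by rewrite sumrB E subrr.
Qed.

Lemma flux {R : realType} n (A : {fset pt n}) (u : pt n -> R) :
  \sum_(x <- A) lap u x = \sum_(x <- A) Out A u x.
Proof.
under eq_bigr => x _ do rewrite (lap_split A).
by rewrite big_split /= in_zero add0r.
Qed.

Definition fnl {R : realType} (lam t : R) : R := lam * expR t * (expR t - 1).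

Lemma fnl_le0 {R : realType} {lam t : R} : 0 <= lam -> t <= 0 -> fnl lam t <= 0.
Proof.
move=> hl ht; rewrite /fnl.
have h1 : expR t <= 1 by rewrite expR_le1.
have h0 : 0 < expR t := expR_gt0 t.
rewrite -mulrA; apply: mulr_ge0_le0 => //; nra.
Qed.

Lemma fnl_gt0 {R : realType} {lam t : R} : 0 < lam -> 0 < t -> 0 < fnl lam t.
Proof.
move=> hl ht; rewrite /fnl.
have h1 : 1 < expR t by rewrite -expR0 ltr_expR.
have h0 : 0 < expR t := expR_gt0 t.
rewrite -mulrA; apply: mulr_gt0 => //; nra.
Qed.

Lemma expR_mulN {R : realType} (t : R) : expR t * expR (- t) = 1.
Proof. by rewrite -expRD subrr expR0. Qed.

Lemma fnl_lip {R : realType} {lam s t : R} : 0 <= lam -> s <= t -> t <= 0 ->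
  fnl lam t - fnl lam s <= lam * (t - s).
Proof.
move=> hl hst ht; rewrite /fnl.
have h1 : expR t <= 1 by rewrite expR_le1.
have h0 : 0 < expR s := expR_gt0 s.
have hs : expR s <= expR t by rewrite ler_expR.
have hk : 1 + (s - t) <= expR (s - t) := expR_ge1Dx (s - t).
have he : expR (s - t) * expR t = expR s by rewrite -expRD subrK.
have hd : expR t - expR s <= t - s by nra.
have : (expR t - expR s) * (expR t + expR s - 1) <= expR t - expR s by nra.
nra.
Qed.

Lemma fnl_low {R : realType} {lam t : R} : 0 < lam -> -2 <= t -> t <= 0 ->
  - t <= expR 4 / lam * (- fnl lam t).
Proof.
move=> hl ht2 ht; rewrite /fnl.
set E := expR t.
have h1 : E <= 1 by rewrite /E expR_le1.
have h0 : 0 < E := expR_gt0 t.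
have hk : 1 + (- t) <= expR (- t) := expR_ge1Dx (- t).
have hm : E * expR (- t) = 1 := expR_mulN t.
have hE : E * (1 - t) <= 1 by nra.
have h4 : expR (-4) <= E * E.
  by rewrite /E -expRD ler_expR; lra.
have h44 : expR 4 * expR (-4) = 1 := @expR_mulN R 4.
have h4p : 0 < expR 4 := @expR_gt0 R 4.
have hm2 : 0 < expR (-4) := @expR_gt0 R (-4).
have key : - t * expR (-4) <= E * (1 - E) by nra.
have -> : expR 4 / lam * - (lam * E * (E - 1)) = expR 4 * (E * (1 - E)).
  by field; lra.
have := ler_wpM2l (ltW h4p) key; rewrite mulrCA h44 mulr1 //.
Qed.

Definition src {R : realType} {n M : nat} (p : 'I_M -> pt n) (nj : 'I_M -> nat) (x : pt n) : R :=
  4 * pi * \sum_(j < M) (nj j)%:R * dirac (p j) x.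

Definition Cg {R : realType} {M : nat} (nj : 'I_M -> nat) : R := 4 * pi * \sum_(j < M) (nj j)%:R.

Lemma dirac_E {R : realType} n (q x : pt n) : @dirac R n q x = (x == q)%:R.
Proof. by rewrite /dirac; case: (x == q). Qed.

Lemma Cg_ge0 {R : realType} M (nj : 'I_M -> nat) : 0 <= @Cg R M nj.
Proof.
rewrite /Cg; apply: mulr_ge0; first by apply: mulr_ge0 => //; exact: pi_ge0.
by apply: sumr_ge0 => j _.
Qed.

Lemma src_ge0 {R : realType} n M (p : 'I_M -> pt n) nj x : 0 <= @src R n M p nj x.
Proof.
rewrite /src; apply: mulr_ge0; first by apply: mulr_ge0 => //; exact: pi_ge0.
apply: sumr_ge0 => j _; rewrite dirac_E; apply: mulr_ge0 => //.
Qed.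

Lemma sum_src_le {R : realType} n M (p : 'I_M -> pt n) nj (A : seq (pt n)) :
  uniq A -> \sum_(x <- A) @src R n M p nj x <= Cg nj.
Proof.
move=> uA; rewrite /src /Cg -mulr_sumr; apply: ler_wpM2l.
  by apply: mulr_ge0 => //; exact: pi_ge0.
rewrite exchange_big /=; apply: ler_sum => j _.
under eq_bigr => x _ do rewrite dirac_E mulrC.
rewrite (sum_pick _ _ _ (fun _ => (nj j)%:R)) //.
case: (p j \in A) => /=; rewrite ?mul1r ?mul0r //.
Qed.

Lemma adj_shift n (x : pt n) i (s : int) : (s = 1 \/ s = -1) -> adj x (shift x i s).
Proof.
move=> hs; rewrite /adj (bigD1 i) //= big1 ?addn0.
  by rewrite ffunE eqxx opprD addNKr; case: hs => ->.
by move=> k /negbTE hk; rewrite ffunE hk subrr.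
Qed.

Lemma sol_id {R : realType} n lam M (p : 'I_M -> pt n) nj (Om A : {fset pt n}) (u : pt n -> R) :
  solves lam p nj Om u -> (forall x, x \in A -> x \in Om) ->
  \sum_(x <- A) Out A u x = \sum_(x <- A) (fnl lam (u x) + src p nj x).
Proof.
move=> [hs _] hA; rewrite -flux; apply: eq_big_seq => x xA.
by rewrite (hs x (hA x xA)).
Qed.

Lemma sum_ge_term {R : realType} (T : eqType) (A : seq T) (F : T -> R) (z : T) :
  z \in A -> (forall x, x \in A -> 0 <= F x) -> F z <= \sum_(x <- A) F x.
Proof.
move=> zA h; rewrite (big_rem z) //= lerDl; rewrite big_seq_cond.
apply: sumr_ge0 => x /andP [xr _]; apply: h; exact: (mem_rem xr).
Qed.

Lemma max_princ {R : realType} n lam M (p : 'I_M -> pt n) nj (Om : {fset pt n}) (v : pt n -> R) :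
  0 < lam -> solves lam p nj Om v -> forall x, x \in Om -> v x <= 0.
Proof.
move=> hl hsol x0 x0O; rewrite leNgt; apply/negP => hx0.
set A := [fset x in Om | 0 < v x]%fset.
have hA : forall x, x \in A -> x \in Om by move=> x; rewrite !inE => /andP [].
have x0A : x0 \in A by rewrite !inE x0O hx0.
have := sol_id A hsol hA.
have H1 : \sum_(x <- A) Out A v x <= 0.
  rewrite big_seq_cond; apply: sumr_le0 => x /andP [xA _].
  rewrite /Out -oppr_ge0 -mulN1r -nbsum_mull; apply: nbsum_ge0 => i s hs.
  case hz: (shift x i s \in A) => /=; first by lra.
  have vx : 0 < v x by move: xA; rewrite !inE => /andP [].
  have : v (shift x i s) <= 0.
    case hzO: (shift x i s \in Om).
      by move: hz; rewrite !inE hzO /= => /negbT; rewrite -leNgt.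
    rewrite (hsol.2 (shift x i s)) //; split; first by rewrite hzO.
    by exists x; [exact: hA | exact: adj_shift].
  lra.
have H2 : 0 < \sum_(x <- A) (fnl lam (v x) + src p nj x).
  apply: (lt_le_trans _ (@sum_ge_term R _ _ (fun x => fnl lam (v x) + src p nj x) x0 x0A _)).
    by have := fnl_gt0 hl hx0; have := @src_ge0 R _ _ p nj x0; lra.
  move=> x; rewrite !inE => /andP [_ hx]; apply: addr_ge0; last exact: src_ge0.
  exact/ltW/(fnl_gt0 hl).
lra.
Qed.

Definition Nb {R : realType} {n : nat} (u : pt n -> R) (x : pt n) : R :=
  nbsum (fun i s => u (shift x i s)).

Lemma lap_Nb {R : realType} n (u : pt n -> R) x : lap u x = Nb u x - 2 * n%:R * u x.
Proof.
rewrite /lap -/(nbsum (fun i s => u (shift x i s) - u x)).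
rewrite (nbsum_add (fun i s => u (shift x i s)) (fun _ _ => - u x)) nbsum_const /Nb; lra.
Qed.

Definition Tm {R : realType} {n M : nat} (lam : R) (p : 'I_M -> pt n) (nj : 'I_M -> nat)
  (Om : {fset pt n}) (u : pt n -> R) (x : pt n) : R :=
  if x \in Om then (Nb u x + lam * u x - fnl lam (u x) - src p nj x) / (2 * n%:R + lam)
  else 0.

Lemma Tm_mono {R : realType} n M (lam : R) (p : 'I_M -> pt n) nj Om (u w : pt n -> R) :
  0 < lam -> (forall x, u x <= w x) -> (forall x, w x <= 0) ->
  forall x, Tm lam p nj Om u x <= Tm lam p nj Om w x.
Proof.
move=> hl huw hw x; rewrite /Tm; case: (x \in Om) => //.
have hD : 0 < 2 * n%:R + lam by have : (0:R) <= n%:R := ler0n _ _; lra.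
rewrite ler_pM2r ?invr_gt0 //.
have h1 : Nb u x <= Nb w x by apply: nbsum_le => i s _; exact: huw.
have h2 := fnl_lip (ltW hl) (huw x) (hw x).
have h3 := huw x.
nra.
Qed.

Lemma Tm_sub {R : realType} n M (lam : R) (p : 'I_M -> pt n) nj Om (u : pt n -> R) x :
  0 < lam -> x \in Om ->
  (u x <= Tm lam p nj Om u x) = (fnl lam (u x) + src p nj x <= lap u x).
Proof.
move=> hl xO; rewrite /Tm xO lap_Nb.
have hD : 0 < 2 * n%:R + lam by have : (0:R) <= n%:R := ler0n _ _; lra.
rewrite ler_pdivlMr //; apply/idP/idP => h; nra.
Qed.

Lemma Tm_eq {R : realType} n M (lam : R) (p : 'I_M -> pt n) nj Om (u : pt n -> R) x :
  0 < lam -> x \in Om ->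
  u x = Tm lam p nj Om u x -> lap u x = fnl lam (u x) + src p nj x.
Proof.
move=> hl xO; rewrite /Tm xO lap_Nb.
have hD : 0 < 2 * n%:R + lam by have : (0:R) <= n%:R := ler0n _ _; lra.
move=> h; have : u x * (2 * n%:R + lam) = Nb u x + lam * u x - fnl lam (u x) - src p nj x.
  by rewrite {1}h mulfVK //; apply: lt0r_neq0.
nra.
Qed.

Definition Rm {R : realType} {n : nat} (Om : {fset pt n}) (i0 : 'I_n) : R :=
  \sum_(y <- Om) `|((y i0)%:~R : R)|.

Definition wq {R : realType} {n : nat} (Om : {fset pt n}) (i0 : 'I_n) (c : R) (x : pt n) : R :=
  if x \in Om then c * (((x i0)%:~R) ^+ 2 - (Rm Om i0 + 1) ^+ 2) else 0.

Lemma Rm_ge {R : realType} n (Om : {fset pt n}) i0 x : x \in Om ->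
  `|((x i0)%:~R : R)| <= Rm Om i0.
Proof.
move=> xO; rewrite /Rm.
exact: (@sum_ge_term R _ _ (fun y : pt n => `|((y i0)%:~R : R)|) x xO).
Qed.

Lemma Rm_ge0 {R : realType} n (Om : {fset pt n}) i0 : 0 <= (Rm Om i0 : R).
Proof. by rewrite /Rm; apply: sumr_ge0. Qed.

Lemma sq_le_abs {R : realType} (a b : R) : `|a| <= b -> a ^+ 2 <= b ^+ 2.
Proof.
move=> h; have h0 : 0 <= `|a| := normr_ge0 a.
by rewrite -real_normK ?num_real //; rewrite lerXn2r // ?nnegrE //; lra.
Qed.

Lemma wq_le0 {R : realType} n (Om : {fset pt n}) i0 (c : R) : 0 <= c -> forall x, wq Om i0 c x <= 0.
Proof.
move=> hc x; rewrite /wq; case xO: (x \in Om) => //.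
apply: mulr_ge0_le0 => //; rewrite subr_le0; apply: sq_le_abs.
have := @Rm_ge R n Om i0 x xO; lra.
Qed.

Lemma shift_coord_abs {R : realType} n (x : pt n) i (s : int) k : (s = 1 \/ s = -1) ->
  `|(((shift x i s) k)%:~R : R)| <= `|((x k)%:~R : R)| + 1.
Proof.
move=> hs; rewrite ffunE; case: (k == i); last by lra.
rewrite intrD; apply: (le_trans (ler_normD _ _)); apply: lerD => //.
by case: hs => ->; rewrite ?rmorphN1 ?normrN1 ?normr1.
Qed.

Lemma nbsum_quad {R : realType} n (x : pt n) (i0 : 'I_n) (c : R) :
  nbsum (fun i s => c * ((((shift x i s) i0)%:~R) ^+ 2 - ((x i0)%:~R) ^+ 2)) = 2 * c.
Proof.
rewrite /nbsum (bigD1 i0) //= big1 ?addr0.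
  rewrite !ffunE eqxx !intrD intrN /=; set a : R := (x i0)%:~R; lra.
by move=> i /negbTE hi; rewrite !ffunE eq_sym hi subrr mulr0 addr0.
Qed.

Lemma wq_sub {R : realType} n M (lam : R) (p : 'I_M -> pt n) nj (Om : {fset pt n}) i0 :
  0 < lam -> forall x, wq Om i0 (Cg nj) x <= Tm lam p nj Om (wq Om i0 (Cg nj)) x.
Proof.
move=> hl x; case xO: (x \in Om); last by rewrite /wq /Tm xO.
rewrite Tm_sub //.
set c : R := Cg nj.
have hc : 0 <= c := Cg_ge0 nj.
have hw := @wq_le0 R n Om i0 c hc.
have h1 : fnl lam (wq Om i0 c x) <= 0 := fnl_le0 (ltW hl) (hw x).
have h2 : src p nj x <= c.
  by have := @sum_src_le R n M p nj [:: x] isT; rewrite big_seq1.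
have h3 : 2 * c <= lap (wq Om i0 c) x.
  rewrite -(nbsum_quad x i0 c) /lap -/(nbsum (fun i s => wq Om i0 c (shift x i s) - wq Om i0 c x)).
  apply: nbsum_le => i s hs.
  have hx : wq Om i0 c x = c * (((x i0)%:~R) ^+ 2 - (Rm Om i0 + 1) ^+ 2) by rewrite /wq xO.
  rewrite hx /wq; case zO: (shift x i s \in Om); first by lra.
  have : (((shift x i s) i0)%:~R : R) ^+ 2 <= (Rm Om i0 + 1) ^+ 2.
    apply: sq_le_abs; have := @shift_coord_abs R n x i s i0 hs; have := @Rm_ge R n Om i0 x xO.
    lra.
  move=> hz; have := ler_wpM2l hc hz; lra.
lra.
Qed.

Definition Sset {R : realType} {n M : nat} (lam : R) (p : 'I_M -> pt n) (nj : 'I_M -> nat)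
  (Om : {fset pt n}) (y : pt n -> R) : Prop :=
  (forall x, y x <= 0) /\ (forall x, y x <= Tm lam p nj Om y x).

Definition ust {R : realType} {n M : nat} (lam : R) (p : 'I_M -> pt n) (nj : 'I_M -> nat)
  (Om : {fset pt n}) (x : pt n) : R :=
  sup (fun r => exists y, Sset lam p nj Om y /\ r = y x).

Lemma Tm0_le0 {R : realType} n M (lam : R) (p : 'I_M -> pt n) nj Om x :
  0 < lam -> Tm lam p nj Om (fun _ => 0) x <= 0.
Proof.
move=> hl; rewrite /Tm; case: (x \in Om) => //.
have hD : 0 < 2 * n%:R + lam by have : (0:R) <= n%:R := ler0n _ _; lra.
rewrite /Nb /fnl expR0 subrr !mulr0 nbsum_const mulr0.
have := @src_ge0 R n M p nj x; set a := src p nj x => ha.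
rewrite (_ : _ - _ = - a); last by lra.
rewrite pmulr_lle0 ?invr_gt0 //; lra.
Qed.

Lemma ust_spec {R : realType} n M (lam : R) (p : 'I_M -> pt n) nj (Om : {fset pt n}) (i0 : 'I_n) :
  0 < lam ->
  [/\ (forall x, ust lam p nj Om x <= 0),
      (forall y, Sset lam p nj Om y -> forall x, y x <= ust lam p nj Om x) &
      (forall x, ust lam p nj Om x = Tm lam p nj Om (ust lam p nj Om) x)].
Proof.
move=> hl.
set u := ust lam p nj Om.
set E := fun x (r : R) => exists y, Sset lam p nj Om y /\ r = y x.
have wS : Sset lam p nj Om (wq Om i0 (Cg nj)).
  by split; [exact: (@wq_le0 R n Om i0 _ (Cg_ge0 nj)) | exact: wq_sub].
have ne : forall x, exists r, E x r.
  by move=> x; exists (wq Om i0 (Cg nj) x); exists (wq Om i0 (Cg nj)).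
have ub0 : forall x r, E x r -> r <= 0.
  by move=> x r [y [[hy _] ->]].
have hs : forall x, has_sup (E x).
  by move=> x; split; [exact: ne | exists 0 => r; exact: ub0].
have K1 : forall y, Sset lam p nj Om y -> forall x, y x <= u x.
  move=> y hy x; apply: (sup_upper_bound (hs x)); by exists y.
have K2 : forall x, u x <= 0.
  by move=> x; apply: ge_sup; [exact: ne | move=> r; exact: ub0].
have K4 : forall x, u x <= Tm lam p nj Om u x.
  move=> x; apply: ge_sup; first exact: ne.
  move=> r [y [hy ->]]; apply: (le_trans (hy.2 x)).
  by apply: Tm_mono => //; exact: K1.
have K5 : forall x, Tm lam p nj Om u x <= 0.
  move=> x; apply: (le_trans _ (@Tm0_le0 R n M lam p nj Om x hl)).
  by apply: Tm_mono => // z; exact: K2.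
have K6 : Sset lam p nj Om (Tm lam p nj Om u).
  split; first exact: K5.
  by move=> x; apply: Tm_mono.
split => //.
by move=> x; apply: le_anti; rewrite K4 /=; exact: K1.
Qed.

Lemma nbsum_ge_term {R : realType} n (F : 'I_n -> int -> R) i :
  (forall i s, (s = 1 \/ s = -1) -> 0 <= F i s) -> F i 1 <= nbsum F.
Proof.
move=> h; rewrite /nbsum (bigD1 i) //=.
have h1 : 0 <= F i (-1) by apply: h; right.
have h2 : 0 <= \sum_(j < n | j != i) (F j 1 + F j (-1)).
  by apply: sumr_ge0 => j _; apply: addr_ge0; apply: h; [left|right].
lra.
Qed.

Lemma sum1_size {R : realType} (T : Type) (s : seq T) : \sum_(x <- s) (1 : R) = (size s)%:R.
Proof.
elim: s => [|a s IH]; first by rewrite big_nil.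
by rewrite big_cons IH /= -add1n natrD.
Qed.

Lemma lip {R : realType} n lam M (p : 'I_M -> pt n) nj (Om : {fset pt n}) (u : pt n -> R) :
  0 < lam -> solves lam p nj Om u -> (forall x, u x <= 0) -> (forall x, x \notin Om -> u x = 0) ->
  forall y i, y \in Om -> u (shift y i 1) - u y <= Cg nj.
Proof.
move=> hl hsol hu0 hout y i yO.
set z := shift y i 1.
have hC := @Cg_ge0 R M nj.
case: (leP (u z) (u y)) => hzy; first by lra.
set A := [fset w in Om | u w < u z]%fset.
have hA : forall x, x \in A -> x \in Om by move=> x; rewrite !inE => /andP [].
have yA : y \in A by rewrite !inE yO.
have hid := sol_id A hsol hA.
have Opos : forall x, x \in A -> forall i s, (s = 1 \/ s = -1) ->
    0 <= (shift x i s \notin A)%:R * (u (shift x i s) - u x).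
  move=> x xA i' s _; case hz: (shift x i' s \in A) => /=; first by lra.
  have hx : u x < u z by move: xA; rewrite !inE => /andP [].
  have : u z <= u (shift x i' s).
    case hzO: (shift x i' s \in Om).
      by move: hz; rewrite !inE hzO /= => /negbT; rewrite -leNgt.
    by rewrite (hout (shift x i' s)) ?hzO //; exact: hu0.
  lra.
have H1 : \sum_(x <- A) Out A u x <= Cg nj.
  rewrite hid; apply: (le_trans _ (@sum_src_le R n M p nj _ (fset_uniq A))).
  apply: ler_sum => x _; have := fnl_le0 (ltW hl) (hu0 x); lra.
have H2 : Out A u y <= \sum_(x <- A) Out A u x.
  apply: (@sum_ge_term R _ _ (Out A u) y yA) => x xA.
  exact: nbsum_ge0 (Opos x xA).
have H3 : u z - u y <= Out A u y.
  have := @nbsum_ge_term R n (fun i s => (shift y i s \notin A)%:R * (u (shift y i s) - u y)) i (Opos y yA).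
  have zA : z \notin A by rewrite !inE ltxx andbF.
  by rewrite -/z zA /= mul1r.
lra.
Qed.

Definition line {n : nat} (x : pt n) (i : 'I_n) (k : nat) : pt n :=
  [ffun j => if j == i then x j + k%:Z else x j].

Lemma line0 n (x : pt n) i : line x i 0 = x.
Proof. by apply/ffunP => j; rewrite ffunE addr0; case: eqP. Qed.

Lemma lineS n (x : pt n) i k : line x i k.+1 = shift (line x i k) i 1.
Proof.
apply/ffunP => j; rewrite !ffunE; case: eqP => // _.
by rewrite -addrA -[in RHS](addrC 1) -intS.
Qed.

Lemma line_coord n (x : pt n) i k : line x i k i = x i + k%:Z.
Proof. by rewrite ffunE eqxx. Qed.

Lemma line_inj n (x : pt n) i : injective (line x i).
Proof.
move=> k1 k2 h; have := congr1 (fun y : pt n => y i) h.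
by rewrite !line_coord => /addrI [].
Qed.

Lemma nat_sum_ge_term (T : eqType) (A : seq T) (F : T -> nat) (z : T) :
  z \in A -> (F z <= \sum_(x <- A) F x)%N.
Proof. by move=> zA; rewrite (big_rem z) //= leq_addr. Qed.

Lemma line_bound n (S : {fset pt n}) x i k : line x i k \in S ->
  (k <= \sum_(y <- S) `|y i - x i|%N)%N.
Proof.
move=> h; have := @nat_sum_ge_term _ _ (fun y : pt n => `|y i - x i|%N) _ h.
by rewrite line_coord addrC addKr.
Qed.

Lemma last_pt n (S : {fset pt n}) x i : x \in S ->
  exists a, [/\ a \in S, shift a i 1 \notin S & forall k, k != i -> a k = x k].
Proof.
move=> xS.
have exP : exists k, line x i k \in S by exists 0%N; rewrite line0.
have ubP : forall k, line x i k \in S -> (k <= \sum_(y <- S) `|y i - x i|%N)%N.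
  by move=> k; exact: line_bound.
case: (ex_maxnP exP ubP) => K hK hmax.
exists (line x i K); split => //.
  rewrite -lineS; apply/negP => h; have := hmax _ h; by rewrite ltnn.
by move=> k /negbTE hk; rewrite ffunE hk.
Qed.

Lemma path_count n (S : {fset pt n}) x i K : (forall k, (k < K)%N -> line x i k \in S) ->
  (K <= size S)%N.
Proof.
move=> h; have := @uniq_leq_size _ (map (line x i) (iota 0 K)) S.
rewrite size_map size_iota; apply.
  by rewrite map_inj_uniq ?iota_uniq //; exact: line_inj.
by move=> y /mapP [k]; rewrite mem_iota add0n => /h hk ->.
Qed.

Definition comb {n : nat} (i0 : 'I_n) (a b : pt n) : pt n :=
  [ffun j => if j == i0 then b j else a j].

Lemma isoper {R : realType} n (S : {fset pt n}) (i0 i1 : 'I_n) : i0 != i1 ->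
  ((size S)%:R : R) <= (\sum_(x <- S) (shift x i0 1 \notin S)%:R) *
                       (\sum_(x <- S) (shift x i1 1 \notin S)%:R).
Proof.
move=> hi; rewrite -sum1_size.
set e0 := fun a : pt n => ((shift a i0 1 \notin S)%:R : R).
set e1 := fun a : pt n => ((shift a i1 1 \notin S)%:R : R).
have e0p : forall a, 0 <= e0 a by move=> a; rewrite /e0; case: (_ \notin _).
have e1p : forall a, 0 <= e1 a by move=> a; rewrite /e1; case: (_ \notin _).
have step1 : \sum_(x <- S) (1 : R) <=
   \sum_(x <- S) \sum_(a <- S) \sum_(b <- S) (e0 a * e1 b * (x == comb i0 a b)%:R).
  rewrite big_seq [X in _ <= X]big_seq; apply: ler_sum => x xS.
  have [a [aS ha0 ha]] := last_pt S x i0 xS.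
  have [b [bS hb0 hb]] := last_pt S x i1 xS.
  have hx : x == comb i0 a b.
    apply/eqP/ffunP => j; rewrite ffunE; case: eqP => [->|/eqP hj].
      by rewrite hb // eq_sym.
    by rewrite ha.
  have t1 : (1:R) <= \sum_(b' <- S) (e0 a * e1 b' * (x == comb i0 a b')%:R).
    apply: (le_trans _ (@sum_ge_term R _ _ (fun b' => e0 a * e1 b' * (x == comb i0 a b')%:R) b bS _)).
      by rewrite /e0 /e1 ha0 hb0 hx /= !mul1r.
    by move=> b' _; apply: mulr_ge0; [exact: mulr_ge0 | case: (_ == _)].
  apply: (le_trans t1).
  apply: (@sum_ge_term R _ _ (fun a' => \sum_(b' <- S) (e0 a' * e1 b' * (x == comb i0 a' b')%:R)) a aS).
  move=> a' _; apply: sumr_ge0 => b' _.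
  by apply: mulr_ge0; [exact: mulr_ge0 | case: (_ == _)].
apply: (le_trans step1).
rewrite exchange_big /=.
under eq_bigr => a _ do rewrite exchange_big /=.
rewrite big_distrl /=; apply: ler_sum => a _.
rewrite big_distrr /=; apply: ler_sum => b _.
under eq_bigr => x _ do rewrite mulrC.
rewrite (sum_pick _ _ _ (fun _ => e0 a * e1 b)) ?fset_uniq //.
set t := (_ \in _)%:R.
have : t <= 1 by rewrite /t; case: (_ \in _).
move=> ht; apply: ler_piMl => //; exact: mulr_ge0.
Qed.

Lemma path_bound {R : realType} n lam M (p : 'I_M -> pt n) nj (Om : {fset pt n}) (u : pt n -> R) (i0 : 'I_n) :
  0 < lam -> solves lam p nj Om u -> (forall x, u x <= 0) -> (forall x, x \notin Om -> u x = 0) ->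
  forall x, x \in [fset y in Om | u y < -1]%fset ->
  - u x <= 1 + Cg nj * (size [fset y in Om | u y < -1]%fset)%:R.
Proof.
move=> hl hsol hu0 hout x xS.
set S1 := [fset y in Om | u y < -1]%fset.
have hC := @Cg_ge0 R M nj.
have notS1 : forall z, z \notin S1 -> -1 <= u z.
  move=> z; rewrite !inE negb_and => /orP [zO|].
    by rewrite hout //; lra.
  by rewrite -leNgt.
have S1O : forall z, z \in S1 -> z \in Om by move=> z; rewrite !inE => /andP [].
set B := (\sum_(y <- S1) `|y i0 - x i0|%N)%N.
have exP : exists k, line x i0 k \notin S1.
  exists B.+1; apply/negP => h; have := line_bound S1 x i0 B.+1 h; by rewrite ltnn.
case: (ex_minnP exP) => K hK hmin.
have inS : forall k, (k < K)%N -> line x i0 k \in S1.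
  move=> k hk; apply/negPn/negP => h; have := hmin _ h; by rewrite leqNgt hk.
have hKs : (K <= size S1)%N := path_count S1 x i0 K inS.
have tel : u (line x i0 K) - u (line x i0 0) = \sum_(0 <= k < K) (u (line x i0 k.+1) - u (line x i0 k)).
  by rewrite telescope_sumr.
have hsum : \sum_(0 <= k < K) (u (line x i0 k.+1) - u (line x i0 k)) <= \sum_(0 <= k < K) Cg nj.
  rewrite big_nat [X in _ <= X]big_nat; apply: ler_sum => k /andP [_ hk].
  rewrite lineS; apply: (lip hl hsol hu0 hout); exact/S1O/inS.
rewrite sumr_const_nat subn0 in hsum.
have h1 := notS1 _ hK.
rewrite line0 in tel.
have : (K%:R : R) <= (size S1)%:R by rewrite ler_nat.
move=> hK'; have := ler_wpM2l hC hK'.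
rewrite -mulr_natr in hsum.
lra.
Qed.

Lemma l2_bound {R : realType} n lam M (p : 'I_M -> pt n) nj (Om : {fset pt n}) (u : pt n -> R) (i0 i1 : 'I_n) :
  i0 != i1 -> 0 < lam -> solves lam p nj Om u -> (forall x, u x <= 0) -> (forall x, x \notin Om -> u x = 0) ->
  \sum_(x <- Om) u x ^+ 2 <=
    expR 4 / lam * Cg nj + ((1 + 2 * n%:R * (expR 4 / lam)) * Cg nj) ^+ 2 *
      (1 + Cg nj * ((1 + 2 * n%:R * (expR 4 / lam)) * Cg nj) ^+ 2) ^+ 2.
Proof.
move=> hi hl hsol hu0 hout.
set C := Cg nj.
set ka := expR 4 / lam.
set Pb := (1 + 2 * n%:R * ka) * C.
have hC : 0 <= C := @Cg_ge0 R M nj.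
have hka : 0 <= ka by rewrite /ka; apply: divr_ge0; [exact: ltW (expR_gt0 _) | exact: ltW].
have hn : (0:R) <= n%:R := ler0n _ _.
set S1 := [fset y in Om | u y < -1]%fset.
have S1O : forall z, z \in S1 -> z \in Om by move=> z; rewrite !inE => /andP [].
have S1u : forall z, z \in S1 -> u z < -1 by move=> z; rewrite !inE => /andP [].
have notS1 : forall z, z \notin S1 -> -1 <= u z.
  move=> z; rewrite !inE negb_and => /orP [zO|].
    by rewrite hout //; lra.
  by rewrite -leNgt.
have mf : forall x, 0 <= - fnl lam (u x) by move=> x; have := fnl_le0 (ltW hl) (hu0 x); lra.
have idS1 : \sum_(x <- S1) Out S1 u x + \sum_(x <- S1) (- fnl lam (u x)) <= C.
  rewrite (sol_id S1 hsol S1O) -big_split /=.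
  apply: (le_trans _ (@sum_src_le R n M p nj _ (fset_uniq S1))).
  by apply: ler_sum => x _; lra.
have OutS1 : forall x, x \in S1 -> 0 <= Out S1 u x.
  move=> x xS; apply: nbsum_ge0 => i s _; case hz: (shift x i s \in S1) => /=; first by lra.
  have := notS1 _ (negbT hz); have := S1u _ xS; lra.
have sOut : 0 <= \sum_(x <- S1) Out S1 u x.
  by rewrite big_seq; apply: sumr_ge0 => x xS; exact: OutS1.
have sF : 0 <= \sum_(x <- S1) (- fnl lam (u x)) by apply: sumr_ge0 => x _.
set P := \sum_(x <- S1) nbsum (fun i s => ((shift x i s \notin S1)%:R : R)).
have hP : P <= Pb.
  have step : P <= \sum_(x <- S1) (Out S1 u x + 2 * n%:R * ka * (- fnl lam (u x))).
    rewrite /P big_seq [X in _ <= X]big_seq; apply: ler_sum => x xS.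
    have -> : 2 * n%:R * ka * - fnl lam (u x) = nbsum (fun (i : 'I_n) (s : int) => ka * - fnl lam (u x)).
      by rewrite nbsum_const mulrA.
    rewrite /Out -nbsum_add; apply: nbsum_le => i s _.
    have hkf : 0 <= ka * - fnl lam (u x) by apply: mulr_ge0.
    case hz: (shift x i s \in S1) => /=; first by lra.
    have hzu := notS1 _ (negbT hz); have hxu := S1u _ xS.
    case: (leP (u x) (-2)) => hx2; first by lra.
    have := fnl_low hl (ltW hx2) (hu0 x); rewrite -/ka; lra.
  apply: (le_trans step); rewrite big_split /= -mulr_sumr.
  rewrite /Pb; have : 0 <= 2 * n%:R * ka by apply: mulr_ge0 => //; lra.
  nra.
have hP0 : 0 <= P.
  apply: sumr_ge0 => x _; apply: nbsum_ge0 => i s _; by case: (_ \notin _).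
have hPk : forall k : 'I_n, 0 <= \sum_(x <- S1) ((shift x k 1 \notin S1)%:R : R) <= P.
  move=> k; apply/andP; split; first by apply: sumr_ge0 => x _; case: (_ \notin _).
  apply: ler_sum => x _.
  apply: (@nbsum_ge_term R n (fun i s => ((shift x i s \notin S1)%:R : R)) k).
  by move=> i s _; case: (_ \notin _).
have hsz : ((size S1)%:R : R) <= Pb ^+ 2.
  apply: (le_trans (@isoper R n S1 i0 i1 hi)).
  have /andP [a0 a1] := hPk i0; have /andP [b0 b1] := hPk i1.
  have hPb0 : 0 <= Pb by lra.
  rewrite expr2; apply: (le_trans (ler_pM a0 b0 a1 b1)); exact: ler_pM.
have sFO : \sum_(x <- Om) (- fnl lam (u x)) <= C.
  have hid := sol_id Om hsol (fun x h => h).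
  have sOO : 0 <= \sum_(x <- Om) Out Om u x.
    rewrite big_seq; apply: sumr_ge0 => x xO; apply: nbsum_ge0 => i s _.
    case hz: (shift x i s \in Om) => /=; first by lra.
    rewrite hout ?hz //; have := hu0 x; lra.
  have := @sum_src_le R n M p nj _ (fset_uniq Om).
  move: hid sOO; rewrite big_split /= => ->.
  rewrite sumrN -/C; lra.
have cnt : \sum_(x <- Om) ((x \in S1)%:R : R) = (size S1)%:R.
  rewrite -sum1_size.
  transitivity (\sum_(x <- Om) \sum_(y <- S1) ((y == x)%:R * (1:R))).
    by apply: eq_bigr => x _; rewrite (sum_pick _ _ _ (fun _ => 1)) ?fset_uniq // mulr1.
  rewrite exchange_big /= big_seq [RHS]big_seq; apply: eq_bigr => y yS.
  under eq_bigr => x _ do rewrite eq_sym.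
  by rewrite (sum_pick _ _ _ (fun _ => 1)) ?fset_uniq // (S1O y yS) mulr1.
set Mx := 1 + C * (size S1)%:R.
have hMx : forall x, x \in S1 -> 0 <= - u x <= Mx.
  move=> x xS; apply/andP; split; first by have := hu0 x; lra.
  exact: (@path_bound R n lam M p nj Om u i0 hl hsol hu0 hout x xS).
have pt_b : forall x, x \in Om -> u x ^+ 2 <= ka * (- fnl lam (u x)) + (x \in S1)%:R * Mx ^+ 2.
  move=> x xO; case xS: (x \in S1) => /=.
    have /andP [h1 h2] := hMx x xS.
    have := mulr_ge0 hka (mf x); rewrite mul1r.
    have : u x ^+ 2 <= Mx ^+ 2 by rewrite -sqrrN; apply: sq_le_abs; rewrite ger0_norm.
    lra.
  have h1 := notS1 _ (negbT xS); have h0 := hu0 x.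
  have h2 : -2 <= u x by lra.
  have := fnl_low hl h2 h0; rewrite -/ka mul0r addr0; nra.
apply: (le_trans (y := \sum_(x <- Om) (ka * (- fnl lam (u x)) + (x \in S1)%:R * Mx ^+ 2))).
  by rewrite big_seq [X in _ <= X]big_seq; apply: ler_sum => x xO; exact: pt_b.
rewrite big_split /= -mulr_sumr -mulr_suml cnt.
have hs0 : (0:R) <= (size S1)%:R := ler0n _ _.
have hMx0 : 0 <= Mx by rewrite /Mx; have := mulr_ge0 hC hs0; lra.
have hMb : Mx <= 1 + C * Pb ^+ 2 by rewrite /Mx; have := ler_wpM2l hC hsz; lra.
apply: lerD; first exact: ler_wpM2l.
have hM2 : Mx ^+ 2 <= (1 + C * Pb ^+ 2) ^+ 2.
  rewrite !expr2; apply: ler_pM => //.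
have hM2' : 0 <= Mx ^+ 2 := exprn_ge0 2 hMx0.
apply: ler_pM => //.
Qed.

Lemma vprime_S {R : realType} n (lam : R) M (p : 'I_M -> pt n) nj (Om : {fset pt n}) (v : pt n -> R) :
  0 < lam -> solves lam p nj Om v ->
  Sset lam p nj Om (fun x => if x \in Om then v x else 0).
Proof.
move=> hl hsol; set v' := fun x => if x \in Om then v x else 0.
have hmp := max_princ hl hsol.
split.
  by move=> x; rewrite /v'; case xO: (x \in Om) => //; exact: hmp.
move=> x; case xO: (x \in Om); last by rewrite /Tm xO /v' xO.
rewrite Tm_sub //.
have hv : v' x = v x by rewrite /v' xO.
have hlap : lap v' x = lap v x.
  rewrite /lap; apply: eq_bigr => i _.
  have E : forall s : int, (s = 1 \/ s = -1) -> v' (shift x i s) = v (shift x i s).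
    move=> s hs; rewrite /v'; case zO: (shift x i s \in Om) => //.
    rewrite (hsol.2 (shift x i s)) //; split; first by rewrite zO.
    by exists x => //; exact: adj_shift.
  by rewrite !E ?hv //; [right | left].
by rewrite hlap hv (hsol.1 x xO).
Qed.

Unset Implicit Arguments.

Theorem lemma3p4 (R : realType) (n : nat) (hn : (2 <= n)%N) (lam : R) (hlam : 0 < lam)
  (C : R) :
  exists C0 : R,
  forall (M : nat) (p : 'I_M -> pt n) (nj : 'I_M -> nat),
    injective p ->
    (forall j, (0 < nj j)%N) ->
    C = 4 * pi * \sum_(j < M) (nj j)%:R ->
    forall Om0 : {fset pt n}, (forall j, p j \in Om0) ->
    forall Om : {fset pt n}, fsubset Om0 Om ->
    exists u : pt n -> R,
      [/\ solves lam p nj Om u,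
          (forall v : pt n -> R, solves lam p nj Om v ->
             forall x, vclos Om x -> v x <= u x)
        & l2norm Om u <= C0].
Proof.
set ka := expR 4 / lam.
set Pb := (1 + 2 * n%:R * ka) * C.
exists (Num.sqrt (ka * C + Pb ^+ 2 * (1 + C * Pb ^+ 2) ^+ 2)).
move=> M p nj _ _ hC Om0 _ Om _.
have hCg : Cg nj = C by rewrite hC.
have h0 : (0 < n)%N by apply: leq_trans hn.
set i0 : 'I_n := Ordinal h0.
set i1 : 'I_n := Ordinal hn.
have hi : i0 != i1 by [].
set u := ust lam p nj Om.
have [hu0 hmax hfix] := @ust_spec R n M lam p nj Om i0 hlam.
have hout : forall x, x \notin Om -> u x = 0.
  by move=> x /negbTE xO; rewrite /u hfix /Tm xO.
have hsol : solves lam p nj Om u.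
  split.
    move=> x xO; apply: Tm_eq => //; first exact: xO.
  by move=> y [yO _]; exact: hout.
exists u; split => //.
  move=> v hv x hx.
  case xO: (x \in Om).
    have := hmax _ (vprime_S hlam hv) x; by rewrite xO.
  case: hx => [xO'|hb]; first by rewrite xO in xO'.
  by rewrite (hv.2 x hb) (hsol.2 x hb).
have hC0 : 0 <= C by rewrite -hCg; exact: Cg_ge0.
have hka : 0 <= ka by rewrite /ka; apply: divr_ge0; [exact: ltW (expR_gt0 _) | exact: ltW].
rewrite /l2norm ler_sqrt; last first.
  apply: addr_ge0; first exact: mulr_ge0.
  by apply: mulr_ge0; exact: sqr_ge0.
have := @l2_bound R n lam M p nj Om u i0 i1 hi hlam hsol hu0 hout.
by rewrite hCg.
Qed.
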